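(* Let $w:\mathbb R^2\to\mathbb R^2$ be any function and $c>0$ a constant such that \[\langle x-y,w(x)-w(y)\rangle>c\,\|w(x)-w(y)\|\] for all $x,y\in\mathbb R^2$ with $\|x-y\|>1$. Put $a:=\min\{c/2,1/2\}$. Then for all $x,y\in\mathbb R^2$ with $\|x-y\|>1$, \[\langle x-y,\,w(x)-w(y)\rangle\ \ge\ a\,\|x-y\|\,\|w(x)-w(y)\| ,\] i.e. the angle between $w(x)-w(y)$ and $x-y$ is at most $\arccos a$ whenever $w(x)\ne w(y)$.
   Context: $\langle\cdot,\cdot\rangle$ and $\|\cdot\|$ denote the standard inner product and Euclidean norm on $\mathbb R^2$. *)

(* Defs.v *)
From Stdlib Require Import Reals.
Open Scope R_scope.

Definition inner (u v : R * R) : R := fst u * fst v + snd u * snd v.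
Definition norm2 (u : R * R) : R := sqrt (inner u u).
Definition vsub (u v : R * R) : R * R := (fst u - fst v, snd u - snd v).

(* Main.v *)
Require Import Defs.
From Stdlib Require Import Reals Lra Psatz.
Open Scope R_scope.

Lemma norm2_ge0 u : 0 <= norm2 u.
Proof. unfold norm2; apply sqrt_pos. Qed.

Lemma norm2_scale (k : R) (u : R*R) : 0 <= k ->
  norm2 (k * fst u, k * snd u) = k * norm2 u.
Proof.
  intros hk. unfold norm2, inner; simpl.
  replace (k * fst u * (k * fst u) + k * snd u * (k * snd u))
    with ((k*k) * (fst u * fst u + snd u * snd u)) by ring.
  rewrite sqrt_mult_alt by nra. rewrite sqrt_square; lra.
Qed.

Lemma norm2_triangle (u v : R*R) :
  norm2 (fst u + fst v, snd u + snd v) <= norm2 u + norm2 v.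
Proof.
  destruct u as [u1 u2], v as [v1 v2]. unfold norm2, inner; simpl.
  pose proof (sqrt_pos (u1*u1+u2*u2)) as Ha.
  pose proof (sqrt_pos (v1*v1+v2*v2)) as Hb.
  pose proof (sqrt_sqrt (u1*u1+u2*u2) ltac:(nra)) as Ea.
  pose proof (sqrt_sqrt (v1*v1+v2*v2) ltac:(nra)) as Eb.
  apply Rsqr_incr_0_var; [|lra].
  unfold Rsqr. rewrite sqrt_sqrt by (pose proof (Rle_0_sqr (u1+v1)); pose proof (Rle_0_sqr (u2+v2)); unfold Rsqr in *; lra).
  set (a := sqrt (u1*u1+u2*u2)) in *. set (b := sqrt (v1*v1+v2*v2)) in *.
  assert (u1*v1+u2*v2 <= a*b).
  { assert ((u1*v1+u2*v2)^2 <= (a*b)^2).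
    { replace ((a*b)^2) with ((a*a)*(b*b)) by ring. rewrite Ea, Eb.
      pose proof (pow2_ge_0 (u1*v2-u2*v1)). nra. }
    apply Rsqr_incr_0_var; [unfold Rsqr; nra | nra]. }
  nra.
Qed.

Lemma key (w : R * R -> R * R) (c : R) (hc : 0 < c)
  (H : forall x y : R * R, norm2 (vsub x y) > 1 ->
         inner (vsub x y) (vsub (w x) (w y)) > c * norm2 (vsub (w x) (w y))) :
  forall n : nat, forall x y : R * R, norm2 (vsub x y) > 1 -> norm2 (vsub x y) <= INR n ->
    inner (vsub x y) (vsub (w x) (w y))
      >= c / 2 * norm2 (vsub x y) * norm2 (vsub (w x) (w y)).
Proof.
  induction n as [|n IH]; intros x y h1 h2.
  - simpl in h2. lra.
  - rewrite S_INR in h2.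
    set (r := norm2 (vsub x y)) in *.
    pose proof (norm2_ge0 (vsub (w x) (w y))).
    destruct (Rle_dec r 2) as [hr|hr].
    + specialize (H x y h1).
      assert (c/2*r*norm2 (vsub (w x) (w y)) <= c*norm2 (vsub (w x) (w y))).
      { apply Rmult_le_compat_r; [lra|]. replace c with (c/2*2) at 2 by field.
        apply Rmult_le_compat_l; lra. }
      lra.
    + set (s := if Rle_dec r 4 then r/2 else 2).
      assert (hs : 1 < s <= 2 /\ 1 < r - s <= r - 1).
      { unfold s; destruct (Rle_dec r 4); lra. }
      set (t := s / r).
      assert (ht : t * r = s) by (unfold t; field; lra).
      assert (ht0 : 0 < t < 1).
      { split. unfold t; apply Rdiv_lt_0_compat; lra.
        apply Rmult_lt_reg_r with r; [lra|]. rewrite ht. lra. }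
      set (z := (fst x - t * fst (vsub x y), snd x - t * snd (vsub x y))).
      assert (E1 : vsub x z = (t * fst (vsub x y), t * snd (vsub x y))).
      { unfold z, vsub; simpl. f_equal; ring. }
      assert (E2 : vsub z y = ((1-t) * fst (vsub x y), (1-t) * snd (vsub x y))).
      { unfold z, vsub; simpl. f_equal; ring. }
      assert (N1 : norm2 (vsub x z) = s).
      { rewrite E1, norm2_scale by lra. fold r. lra. }
      assert (N2 : norm2 (vsub z y) = r - s).
      { rewrite E2, norm2_scale by lra. fold r. nra. }
      pose proof (H x z ltac:(lra)) as A1.
      pose proof (IH z y ltac:(lra) ltac:(lra)) as A2.
      rewrite N2 in A2. rewrite E1 in A1. rewrite E2 in A2.
      assert (EV : vsub (w x) (w y) =
        (fst (vsub (w x) (w z)) + fst (vsub (w z) (w y)),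
         snd (vsub (w x) (w z)) + snd (vsub (w z) (w y)))).
      { unfold vsub; simpl. f_equal; ring. }
      pose proof (norm2_triangle (vsub (w x) (w z)) (vsub (w z) (w y))) as T.
      rewrite <- EV in T.
      pose proof (norm2_ge0 (vsub (w x) (w z))).
      pose proof (norm2_ge0 (vsub (w z) (w y))).
      set (v1 := vsub (w x) (w z)) in *. set (v2 := vsub (w z) (w y)) in *.
      assert (EI : inner (vsub x y) (vsub (w x) (w y)) =
                   inner (vsub x y) v1 + inner (vsub x y) v2).
      { rewrite EV. unfold inner; simpl. ring. }
      assert (I1 : inner (t * fst (vsub x y), t * snd (vsub x y)) v1 = t * inner (vsub x y) v1)
        by (unfold inner; simpl; ring).
      assert (I2 : inner ((1-t) * fst (vsub x y), (1-t) * snd (vsub x y)) v2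
                   = (1-t) * inner (vsub x y) v2) by (unfold inner; simpl; ring).
      rewrite I1 in A1. rewrite I2 in A2. rewrite EI.
      assert (B2 : inner (vsub x y) v2 >= c/2 * r * norm2 v2).
      { assert (r - s = (1-t) * r) by nra. rewrite H3 in A2.
        apply Rle_ge; apply Rmult_le_reg_l with (1-t); [lra|].
        replace ((1-t)*(c/2*r*norm2 v2)) with (c / 2 * ((1 - t) * r) * norm2 v2) by ring.
        lra. }
      assert (B1 : inner (vsub x y) v1 >= c/2 * r * norm2 v1).
      { apply Rle_ge; apply Rmult_le_reg_l with t; [lra|].
        assert (t * (c/2*r*norm2 v1) <= c * norm2 v1).
        { replace (t * (c/2*r*norm2 v1)) with ((t*r)*(c/2*norm2 v1)) by ring.
          rewrite ht. replace (c * norm2 v1) with (2*(c/2*norm2 v1)) by field.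
          apply Rmult_le_compat_r; [|lra].
          apply Rmult_le_pos; lra. }
        lra. }
      assert (c/2*r*norm2 (vsub (w x) (w y)) <= c/2*r*(norm2 v1 + norm2 v2)).
      { apply Rmult_le_compat_l; [apply Rmult_le_pos; lra|exact T]. }
      lra.
Qed.

Theorem mainTheorem5 (w : R * R -> R * R) (c : R) (hc : 0 < c)
  (H : forall x y : R * R, norm2 (vsub x y) > 1 ->
         inner (vsub x y) (vsub (w x) (w y)) > c * norm2 (vsub (w x) (w y))) :
  forall x y : R * R, norm2 (vsub x y) > 1 ->
    inner (vsub x y) (vsub (w x) (w y))
      >= Rmin (c / 2) (1 / 2) * norm2 (vsub x y) * norm2 (vsub (w x) (w y)).
Proof.
  intros x y h.
  destruct (INR_unbounded (norm2 (vsub x y))) as [n hn].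
  pose proof (key w c hc H n x y h ltac:(lra)) as K.
  pose proof (norm2_ge0 (vsub (w x) (w y))).
  pose proof (Rmin_l (c/2) (1/2)).
  assert (Rmin (c / 2) (1 / 2) * norm2 (vsub x y) * norm2 (vsub (w x) (w y))
     <= c/2 * norm2 (vsub x y) * norm2 (vsub (w x) (w y))).
  { apply Rmult_le_compat_r; [lra|]. apply Rmult_le_compat_r; lra. }
  lra.
Qed.
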